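(* For all integers $n\geq 1$ and $j\geq 0$, $$FO_{j,2}(n)=FD_{j,2}(n).$$
   Context: A partition is a finite nonincreasing sequence of positive integers (its parts); its size is the sum of its parts and is not fixed here. For a partition $\pi$, let $\alpha(\pi)$ be its largest part and $\lambda(\pi)$ its number of parts; the perimeter of $\pi$ is $\alpha(\pi)+\lambda(\pi)-1$ (the largest hook length of its Ferrers diagram). For a condition $*$, $r(n\mid * )$ denotes the number of partitions (of any size) with perimeter $n$ satisfying $*$. Define $FO_{j,2}(n)$ to be the number of partitions of perimeter $n$ having exactly $j$ distinct part sizes that are even (each such part may repeat), and $FD_{j,2}(n)$ to be the number of partitions of perimeter $n$ having exactly $j$ distinct part sizes that each appear at least $2$ times. *)

(* Defs.v *)
From mathcomp Require Import all_boot.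
Set Implicit Arguments. Unset Strict Implicit. Unset Printing Implicit Defensive.

Definition is_partition (s : seq nat) : bool :=
  sorted geq s && all (fun x => 0 < x) s.

Definition alpha (s : seq nat) : nat := \max_(x <- s) x.
Definition lambda (s : seq nat) : nat := size s.
Definition perimeter (s : seq nat) : nat := alpha s + lambda s - 1.

Definition num_even_part_sizes (s : seq nat) : nat :=
  count (fun x => ~~ odd x) (undup s).

Definition num_repeated_part_sizes (s : seq nat) : nat :=
  count (fun x => 2 <= count_mem x s) (undup s).

(* r(n | P): number of partitions (of any size) with perimeter n satisfying P.
   A partition of perimeter n >= 1 has at most n parts, each at most n, so
   the partitions of perimeter n are exactly the values of certain
   bounded sequences  s : n.-bseq 'I_n.+1  (the map s |-> map val s is
   injective); we count those. *)
Definition r (n : nat) (P : seq nat -> bool) : nat :=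
  #|[set s : n.-bseq 'I_n.+1 |
      let p := map val s in [&& is_partition p, perimeter p == n & P p]]|.

Definition FO2 (j n : nat) : nat := r n (fun p => num_even_part_sizes p == j).
Definition FD2 (j n : nat) : nat := r n (fun p => num_repeated_part_sizes p == j).

(* Main.v *)
Require Import Defs.
From mathcomp Require Import all_boot.
From mathcomp Require Import zify.

Lemma card_bridge (n : nat) (Q : pred (seq nat)) (L : seq (seq nat)) :
  uniq L -> (forall p, Q p -> p \in L) ->
  (forall p, p \in L -> (size p <= n) && all (fun x => x < n.+1) p) ->
  #|[set s : n.-bseq 'I_n.+1 | Q (map val s)]| = count Q L.
Proof.
move=> uL QL bL.
set A := [set s : n.-bseq 'I_n.+1 | Q (map val s)].
set f := fun s : n.-bseq 'I_n.+1 => map val (s : seq 'I_n.+1).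
have finj : injective f.
  move=> s1 s2 /= h; apply: val_inj; exact: (inj_map val_inj h).
rewrite cardE -(size_map f) -size_filter.
apply: perm_size; apply: uniq_perm.
- by rewrite (map_inj_uniq finj) enum_uniq.
- by rewrite filter_uniq.
move=> x; rewrite mem_filter.
apply/mapP/idP.
  case=> s; rewrite mem_enum inE => Hs ->; by rewrite Hs QL.
case/andP=> Qx xL.
have /andP[sz al] := bL _ xL.
have sz' : size (map (@inord n) x) <= n by rewrite size_map.
exists (Bseq sz'); last first.
  rewrite /f /= -map_comp; symmetry; apply: map_id_in => z zx /=.
  by rewrite inordK //; move/allP: al; apply.
rewrite mem_enum inE.
have -> : map val (Bseq sz' : seq 'I_n.+1) = x.
  rewrite /= -map_comp; apply: map_id_in => z zx /=.
  by rewrite inordK //; move/allP: al; apply.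
done.
Qed.

Fixpoint plist (n : nat) : seq (seq nat) :=
  match n with
  | 0 => [::]
  | m.+1 => if m is 0 then [:: [:: 1]]
            else [seq rcons p 1 | p <- plist m] ++ [seq map succn p | p <- plist m]
  end.

Lemma plistS n : plist n.+2 = [seq rcons p 1 | p <- plist n.+1] ++ [seq map succn p | p <- plist n.+1].
Proof. by []. Qed.

Lemma alpha_nil : alpha [::] = 0.
Proof. by rewrite /alpha big_nil. Qed.
Lemma alpha_cons x s : alpha (x :: s) = maxn x (alpha s).
Proof. by rewrite /alpha big_cons. Qed.
Lemma alpha_rcons s x : alpha (rcons s x) = maxn (alpha s) x.
Proof.
elim: s => [|y s IH] /=; first by rewrite alpha_cons alpha_nil max0n maxn0.
by rewrite !alpha_cons IH maxnA.
Qed.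
Lemma alpha_mapS s : alpha (map succn s) = alpha s + (s != [::]).
Proof.
elim: s => [|y s IH] /=; first by rewrite alpha_nil.
rewrite !alpha_cons IH; case: s IH => [|z s] /= IH.
  by rewrite alpha_nil maxn0 !addn0 addn1 maxn0.
by rewrite !addn1 maxnSS.
Qed.
Lemma alpha_ge s x : x \in s -> x <= alpha s.
Proof.
elim: s => [|y s IH] //=; rewrite inE alpha_cons => /orP[/eqP->|h].
  exact: leq_maxl.
apply: leq_trans (IH h) (leq_maxr _ _).
Qed.

Lemma geq_trans' : transitive geq.
Proof. move=> a b c /= h1 h2; exact: leq_trans h2 h1. Qed.

Lemma plistP n p : 1 <= n ->
  (p \in plist n) = is_partition p && (perimeter p == n).
Proof.
elim: n p => [|n IH] p // _.
case: n IH => [|n] IH.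
  rewrite /= inE; apply/idP/idP.
    move/eqP=> ->. by rewrite /is_partition /perimeter /lambda alpha_cons alpha_nil.
  case: p => [|x s]; first by rewrite /perimeter alpha_nil.
  rewrite /is_partition /perimeter /lambda alpha_cons /= => /andP[/andP[_ /andP[x0 _]] /eqP h].
  have hm : x <= maxn x (alpha s) := leq_maxl _ _.
  have s0 : s = [::] by case: s h hm => //= *; lia.
  subst s.
  rewrite alpha_nil maxn0 in h; apply/eqP; congr [:: _]; lia.
have IH' := IH _ (erefl _).
rewrite plistS mem_cat; apply/idP/idP.
  case/orP=> /mapP[q qL ->]; move: qL; rewrite IH' /is_partition /perimeter.
    case: q => [|y q]; first by rewrite alpha_nil.
    rewrite /= => /andP[/andP[srt /andP[y0 al]] /eqP per].
    rewrite rcons_path srt all_rcons /= y0 al /=.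
    have yl : 0 < last y q.
      have := mem_last y q; rewrite inE => /orP[/eqP->//|].
      by move/allP: al; apply.
    rewrite yl /= /lambda -rcons_cons alpha_rcons size_rcons.
    have : y <= maxn y (alpha q) := leq_maxl _ _.
    move: per; rewrite /lambda alpha_cons /= => per h1.
    apply/eqP; rewrite (maxn_idPl _); lia.
  case: q => [|y q]; first by rewrite alpha_nil.
  move=> /andP[/andP[srt al] /eqP per].
  rewrite sorted_map all_map /lambda size_map alpha_mapS.
  apply/andP; split; first (apply/andP; split).
  - exact: srt.
  - by apply/allP => z /= /(allP al).
  apply/eqP; move: per; rewrite /lambda /=; lia.
rewrite /is_partition /perimeter /lambda => /andP[/andP[srt al] /eqP per].
case: (lastP p) srt al per => [|q x] srt al per.
  by move: per; rewrite alpha_nil.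
move: al; rewrite all_rcons => /andP[x0 al].
have sq : sorted geq q.
  exact: (subseq_sorted geq_trans' (subseq_rcons q x) srt).
case: (boolP (1 \in rcons q x)) => [h1|h1].
  have x1 : x = 1.
    move: h1; rewrite mem_rcons inE => /orP[/eqP->//|h1].
    have : sorted geq [:: 1; x].
      apply: (subseq_sorted geq_trans' _ srt).
      rewrite -cats1 -[[:: 1; x]]/([:: 1] ++ [:: x]); apply: cat_subseq => //.
      by rewrite sub1seq.
    by rewrite /= andbT => h; apply/eqP; rewrite eqn_leq h x0.
  subst x.
  have qn : q != [::].
    apply/negP => /eqP qn; move: per; rewrite qn alpha_rcons alpha_nil /=; lia.
  have aq : 1 <= alpha q.
    clear h1; case: q qn al {sq srt per} => [|y q] //= _ /andP[y0 _].
    rewrite alpha_cons; apply: leq_trans y0 (leq_maxl _ _).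
  apply/orP; left; apply/mapP; exists q => //.
  rewrite IH' /is_partition sq al /perimeter /=.
  move: per; rewrite alpha_rcons size_rcons (maxn_idPl aq); rewrite /lambda; lia.
apply/orP; right; apply/mapP; exists (map predn (rcons q x)); last first.
  rewrite -map_comp; symmetry; apply: map_id_in => z zin /=.
  rewrite prednK //; move: zin; rewrite mem_rcons inE => /orP[/eqP->//|].
  by move/allP: al; apply.
have pos : forall z, z \in rcons q x -> 1 < z.
  move=> z zin; have : z != 1 by apply/negP => /eqP zz; rewrite -zz zin in h1.
  have : 0 < z.
    by move: zin; rewrite mem_rcons inE => /orP[/eqP->//|]; move/allP: al; apply.
  lia.
have eqp : rcons q x = map succn (map predn (rcons q x)).
  rewrite -map_comp; symmetry; apply: map_id_in => z zin /=.
  by rewrite prednK // ltnW // pos.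
rewrite IH' /is_partition /perimeter.
move: srt per; rewrite {1 2}eqp sorted_map alpha_mapS => -> /=.
rewrite /lambda size_map.
have ne : map predn (rcons q x) != [::] by case: (q) .
rewrite ne => per; apply/andP; split.
  by apply/allP => z /mapP[w win ->]; have := pos _ win; lia.
move: per; rewrite size_rcons /=; lia.
Qed.

Lemma plist_bound n p : 1 <= n -> p \in plist n ->
  (size p <= n) && all (fun x => x < n.+1) p.
Proof.
move=> n1; rewrite plistP // /is_partition /perimeter /lambda.
case/andP=> /andP[_ al] /eqP per.
case: p al per => [|y q] //= /andP[y0 al] per.
have ha : forall z, z \in y :: q -> z <= alpha (y :: q) by move=> z; apply: alpha_ge.
have ya := ha y (mem_head _ _).
have hs : forall a, a = alpha (y :: q) -> a + (size q).+1 - 1 = n -> y <= a ->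
   [&& size q < n, y < n.+1 & all (fun x : nat => x < n.+1) q].
  move=> a ae ap ay; apply/and3P; split; try lia.
  apply/allP => z zq; have := ha z; rewrite inE zq orbT -ae => /(_ isT); lia.
exact: (hs _ erefl per ya).
Qed.
Lemma dummy : True.
Proof.
Abort.

Lemma plist_pos n p : 1 <= n -> p \in plist n -> all (fun x => 0 < x) p.
Proof. by move=> n1; rewrite plistP // => /andP[/andP[]]. Qed.

Lemma plist_uniq n : uniq (plist n).
Proof.
elim: n => [|n IH] //; case: n IH => [|n] IH //.
rewrite plistS cat_uniq (map_inj_uniq (@rcons_injl _ 1)) IH.
rewrite (map_inj_uniq (inj_map succn_inj)) IH /= andbT.
apply/hasPn => p /mapP[q qL ->]; apply/negP => /mapP[q' _ eq].
have : 1 \in rcons q' 1 by rewrite mem_rcons mem_head.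
rewrite -eq => /mapP[z zq] /eqP; rewrite eqSS => /eqP z0.
have := plist_pos n.+1 q isT qL => /allP/(_ z zq); rewrite -z0.
done.
Qed.

Definition eS (p : seq nat) := num_even_part_sizes p.
Definition oS (p : seq nat) := count odd (undup p).
Definition dS (p : seq nat) := num_repeated_part_sizes p.
Definition mS (p : seq nat) := count_mem 1 p.

Lemma perm_stats {s t : seq nat} : perm_eq s t ->
  [/\ eS s = eS t, oS s = oS t, dS s = dS t, mS s = mS t & (1 \in s) = (1 \in t)].
Proof.
move=> pst.
have pu : perm_eq (undup s) (undup t) by apply: perm_undup; exact: perm_mem.
split.
- by rewrite /eS /num_even_part_sizes (permP pu).
- by rewrite /oS (permP pu).
- rewrite /dS /num_repeated_part_sizes (permP pu).
  by apply: eq_count => x; rewrite (permP pst).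
- by rewrite /mS (permP pst).
- exact: perm_mem.
Qed.

Lemma count_change (a b : pred nat) (u : seq nat) x : uniq u -> x \in u ->
  (forall y, y != x -> a y = b y) -> count a u + b x = count b u + a x.
Proof.
elim: u => [|y u IH] //= /andP[yu uu]; rewrite inE => xin hab.
case: (eqVneq x y) => [exy|nxy].
  subst y.
  have -> : count a u = count b u.
    apply: eq_in_count => z zu; apply: hab; apply/negP => /eqP zx.
    by rewrite -zx zu in yu.
  lia.
rewrite (negbTE nxy) /= in xin; have := IH uu xin hab.
rewrite (hab y); last by rewrite eq_sym.
lia.
Qed.

Lemma stats_R (p : seq nat) :
  [/\ eS (rcons p 1) = eS p, oS (rcons p 1) = oS p + (1 \notin p),
      dS (rcons p 1) = dS p + (mS p == 1), mS (rcons p 1) = (mS p).+1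
    & 1 \in rcons p 1].
Proof.
have [-> -> -> -> ->] := perm_stats (permEl (perm_rcons (1:nat) p)).
rewrite /eS /oS /dS /mS /num_even_part_sizes /num_repeated_part_sizes /=.
rewrite inE eqxx /=.
case: (boolP (1 \in p)) => h1 /=.
- split => //; first by rewrite addn0.
  rewrite ?eqxx /=.
  have cp : 0 < count_mem 1 p by rewrite -has_count; apply/hasP; exists 1.
  have := count_change (fun x => 2 <= count_mem x p)
     (fun x => 2 <= (1 == x) + count_mem x p) (undup p) 1 (undup_uniq p).
  rewrite mem_undup h1 => /(_ isT).
  have hh : forall y, y != 1 -> (2 <= count_mem y p) = (2 <= (1 == y) + count_mem y p).
    by move=> y; rewrite eq_sym => /negbTE ->.
  move=> /(_ hh) /=; rewrite ?eqxx.
  set A := count _ _; set B := count _ _.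
  case: (count_mem 1 p) cp => [|[|k]] //= _; lia.
- split => //; first by rewrite addn1.
  rewrite ?eqxx /=.
  have c0 : count_mem 1 p = 0 by apply/count_memPn.
  rewrite c0 /= addn0; apply: eq_in_count => y; rewrite mem_undup => yp.
  have : 1 != y by apply/negP => /eqP e1; rewrite e1 yp in h1.
  by move/negbTE ->.
Qed.

Lemma stats_S (p : seq nat) : all (fun x => 0 < x) p ->
  [/\ eS (map succn p) = oS p, oS (map succn p) = eS p,
      dS (map succn p) = dS p, mS (map succn p) = 0
    & 1 \notin map succn p].
Proof.
move=> pos.
have n1 : 1 \notin map succn p.
  apply/negP => /mapP[z zp] /eqP; rewrite eqSS => /eqP z0.
  by move/allP: pos => /(_ z zp); rewrite -z0.
rewrite /eS /oS /dS /mS /num_even_part_sizes /num_repeated_part_sizes.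
rewrite undup_map_inj; last exact: succn_inj.
rewrite !count_map; split => //.
- by apply: eq_count => x /=; rewrite negbK.
- apply: eq_count => x /=; rewrite count_map; congr (2 <= _).
apply/eqP; rewrite -leqn0 leqNgt -has_count; apply/hasPn => z zp /=.
by move/allP: pos => /(_ z zp); case: (z).
Qed.

Definition tau (a c : nat) : nat * bool :=
  match c with 0 => (a, false) | 1 => (a.+1, true) | _ => (a, true) end.
Definition oh (p : seq nat) := (oS p, 1 \in p).
Definition td (p : seq nat) := tau (dS p) (mS p).

Lemma inv n : 1 <= n ->
  perm_eq (map eS (plist n)) (map dS (plist n)) /\
  perm_eq (map oh (plist n)) (map td (plist n)).
Proof.
elim: n => [|n IH] // _; case: n IH => [|n] IH; first by split.
have [I1 I2] := IH isT.
set L := plist n.+1.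
have pos : forall p, p \in L -> all (fun x => 0 < x) p by move=> p; apply: plist_pos.
rewrite plistS !map_cat -!map_comp.
have E1 : map (eS \o (rcons^~ 1)) L = map eS L.
  by apply: eq_map => p /=; have [-> _ _ _ _] := stats_R p.
have E2 : map (eS \o map succn) L = map oS L.
  by apply/eq_in_map => p /pos P /=; have [-> _ _ _ _] := stats_S p P.
have D1 : map (dS \o (rcons^~ 1)) L = map (fun p => dS p + (mS p == 1)) L.
  by apply: eq_map => p /=; have [_ _ -> _ _] := stats_R p.
have D2 : map (dS \o map succn) L = map dS L.
  by apply/eq_in_map => p /pos P /=; have [_ _ -> _ _] := stats_S p P.
have O1 : map (oh \o (rcons^~ 1)) L = map (fun p => (oS p + (1 \notin p), true)) L.
  by apply: eq_map => p /=; rewrite /oh; have [_ -> _ _ ->] := stats_R p.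
have O2 : map (oh \o map succn) L = map (fun p => (eS p, false)) L.
  apply/eq_in_map => p /pos P /=; rewrite /oh; have [_ -> _ _ h] := stats_S p P.
  by rewrite (negbTE h).
have T1 : map (td \o (rcons^~ 1)) L =
          map (fun p => (dS p + (mS p < 2), true)) L.
  apply: eq_map => p /=; rewrite /td; have [_ _ -> -> _] := stats_R p.
  by case: (mS p) => [|[|k]] /=; rewrite ?addn0 ?addn1.
have T2 : map (td \o map succn) L = map (fun p => (dS p, false)) L.
  by apply/eq_in_map => p /pos P /=; rewrite /td; have [_ _ -> -> _] := stats_S p P.
rewrite E1 E2 D1 D2 O1 O2 T1 T2; split.
  rewrite perm_catC; apply: perm_cat => //.
  have -> : map oS L = map fst (map oh L) by rewrite -map_comp.
  have -> : map (fun p => dS p + (mS p == 1)) L = map fst (map td L).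
    rewrite -map_comp; apply: eq_map => p /=; rewrite /td.
    by case: (mS p) => [|[|k]] /=; rewrite ?addn0 ?addn1.
  exact: perm_map.
apply: perm_cat.
  set g := fun ab : nat * bool => (ab.1 + ~~ ab.2, true).
  have -> : map (fun p => (oS p + (1 \notin p), true)) L = map g (map oh L)
    by rewrite -map_comp.
  have -> : map (fun p => (dS p + (mS p < 2), true)) L = map g (map td L).
    rewrite -map_comp; apply: eq_map => p /=; rewrite /g /td.
    by case: (mS p) => [|[|k]] /=; rewrite ?addn0 ?addn1.
  exact: perm_map.
have -> : map (fun p => (eS p, false)) L = map (fun a => (a, false)) (map eS L)
  by rewrite -map_comp.
have -> : map (fun p => (dS p, false)) L = map (fun a => (a, false)) (map dS L)
  by rewrite -map_comp.
exact: perm_map.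
Qed.

Lemma r_count n (P : pred (seq nat)) : 1 <= n -> r n P = count P (plist n).
Proof.
move=> n1; rewrite /r.
rewrite (@card_bridge n (fun p => [&& is_partition p, perimeter p == n & P p]) (plist n)).
- apply: eq_in_count => p pL /=; have := plistP n p n1; rewrite pL => /esym/andP[-> ->] /=; done.
- exact: plist_uniq.
- by move=> p /and3P[h1 h2 _]; rewrite plistP // h1 h2.
- by move=> p; apply: plist_bound.
Qed.

Theorem theorem1p1 (n j : nat) : 1 <= n -> FO2 j n = FD2 j n.
Proof.
move=> n1; rewrite /FO2 /FD2 !r_count //.
have [I1 _] := inv n n1.
have := permP I1 (pred1 j); rewrite !count_map.
by move=> h; exact: h.
Qed.
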